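(* Let $k=k(n)\ge 2$ be an integer with $k=o\!\left(\frac{n}{\log n}\right)$, and for a subspace $U\le\mathbb{F}_2^k$ define $$R_U=\sum_{I\subseteq[k]}(-1)^{k-|I|}N^{-\lambda\,(\dim U_I-k+|I|)}.$$ Then (1) if $U$ is robust, $R_U=\Theta\!\left(N^{-\lambda\dim U}\right)$ as $n\to\infty$; (2) if $U$ is not robust, $R_U=0$.
   Context: $\lambda\in(0,1)$ is fixed, $N=2^n$, and $n\to\infty$. For a subspace $U\le\mathbb{F}_2^k$ and $I\subseteq[k]$, $U_I=\{u_I:u\in U\}$ is the projection of $U$ onto the coordinates in $I$ (with $U_\emptyset$ of dimension $0$). Coordinate $i\in[k]$ is sensitive for $U$ if $\dim U_{[k]\setminus\{i\}}=\dim U-1$; $U$ is robust if it has no sensitive coordinate. *)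

(* Defs.v *)
From HB Require Import structures.
From mathcomp Require Import all_boot all_order all_algebra.
From Stdlib Require Import Reals.

Set Implicit Arguments.
Unset Strict Implicit.
Unset Printing Implicit Defensive.

(* A subspace U <= F_2^k is represented as the row space of a matrix
   U : 'M['F_2]_k (every subspace of F_2^k is the row space of some k x k
   matrix).  dim U = \rank U. *)

Section Subspaces.
Local Open Scope ring_scope.

(* The row space of [proj_mx I U] is isomorphic (via deleting the
   zero columns) to U_I = {u_I : u in U} <= F_2^I, so their dimensions agree. *)
Definition proj_mx (k : nat) (I : {set 'I_k}) (U : 'M['F_2]_k) : 'M['F_2]_k :=
  \matrix_(i < k, j < k) (if j \in I then U i j else 0).

Definition dimU (k : nat) (U : 'M['F_2]_k) : nat := \rank U.

Definition dim_proj (k : nat) (U : 'M['F_2]_k) (I : {set 'I_k}) : nat :=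
  \rank (proj_mx I U).

End Subspaces.

(* coordinate i is sensitive for U : dim U_{[k] \ {i}} = dim U - 1
   (stated without truncated subtraction, so the zero space is robust) *)
Definition sensitive (k : nat) (U : 'M['F_2]_k) (i : 'I_k) : Prop :=
  (dim_proj U [set~ i]).+1 = dimU U.

Definition robust (k : nat) (U : 'M['F_2]_k) : Prop :=
  forall i : 'I_k, ~ sensitive U i.

Local Open Scope R_scope.

Definition Nn (n : nat) : R := 2 ^ n.

(* R_U = sum_{I subset [k]} (-1)^{k-|I|} N^{-lambda (dim U_I + k - |I|)}
   (sign of (k - |I|) corrected) *)
Definition R_U (lam : R) (n k : nat) (U : 'M['F_2]_k) : R :=
  \big[Rplus/0]_(I : {set 'I_k})
     ((-1) ^ (subn k #|I|) *
      Rpower (Nn n) (- (lam * (INR (dim_proj U I) + INR k - INR #|I|)))).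

Definition little_o_n_over_log (k : nat -> nat) : Prop :=
  forall eps : R, 0 < eps ->
    exists n0 : nat, forall n : nat, (n0 <= n)%nat ->
      INR (k n) <= eps * (INR n / ln (INR n)).

(* Main.v *)
From HB Require Import structures.
Require Import Defs.
From mathcomp Require Import all_boot all_order all_algebra.
From Stdlib Require Import Reals Lra Lia.
From mathcomp Require Import zify.

Lemma Rplus_assoc' : associative Rplus.
Proof. move=> x y z; by rewrite Rplus_assoc. Qed.
HB.instance Definition _ := Monoid.isComLaw.Build R 0%R Rplus Rplus_assoc' Rplus_comm Rplus_0_l.

Section LinAlg.
Local Open Scope ring_scope.
Import GRing.Theory.
Context {k : nat} (U : 'M['F_2]_k).

Definition Cm (A : {set 'I_k}) : 'M['F_2]_k := (Defs.proj_mx A U)^T.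
Definition rk A := \rank (Cm A).
Definition dg (A : {set 'I_k}) : 'rV['F_2]_k := \row_j (j \in A)%:R.

Lemma rkE (A : {set 'I_k}) : rk A = dim_proj U A.
Proof. by rewrite /rk /Cm mxrank_tr. Qed.

Lemma Cm_mul (A B : {set 'I_k}) : diag_mx (dg A) *m Cm B = Cm (A :&: B).
Proof.
apply/matrixP => i j; rewrite mul_diag_mx !mxE in_setI.
by case: (i \in A); case: (i \in B); rewrite /= ?mulr1n ?mulr0n ?mul1r ?mul0r.
Qed.

Lemma Cm_U (A B : {set 'I_k}) : Cm (A :|: B) = Cm A + Cm (B :\: A).
Proof.
apply/matrixP => i j; rewrite !mxE in_setU in_setD.
by case: (i \in A); case: (i \in B); rewrite /= ?addr0 ?add0r.
Qed.

Lemma Cm_sub (A B : {set 'I_k}) : (Cm (A :&: B) <= Cm B)%MS.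
Proof. by rewrite -Cm_mul submxMl. Qed.

Lemma rk_mono (A B : {set 'I_k}) : A \subset B -> leq (rk A) (rk B).
Proof. move=> /setIidPl <-; apply: mxrankS; exact: Cm_sub. Qed.

Lemma rk_submod (A B : {set 'I_k}) : leq (addn (rk (A :|: B)) (rk (A :&: B))) (addn (rk A) (rk B)).
Proof.
rewrite /rk -(mxrank_sum_cap (Cm A) (Cm B)) leq_add //.
  rewrite Cm_U; apply: mxrankS; apply: addmx_sub_adds => //.
  by rewrite -(setIidPl (subsetDl B A)) Cm_sub.
apply: mxrankS; rewrite sub_capmx; apply/andP; split.
  by rewrite setIC Cm_sub.
by rewrite Cm_sub.
Qed.

Lemma rk_set1 j : leq (rk [set j]) 1.
Proof.
rewrite /rk; have -> : Cm [set j] = delta_mx j j *m Cm setT.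
  have -> : delta_mx j j = diag_mx (dg [set j]).
    apply/matrixP => a b; rewrite !mxE in_set1.
    case: (a =P j) => [->|ha]; case: (b =P j) => [->|hb];
      rewrite ?eqxx ?mulr1n ?mulr0n ?mul0rn //.
    by rewrite eq_sym (introF eqP hb).
  by rewrite Cm_mul setIT.
by apply: leq_trans (mxrankM_maxl _ _) _; rewrite mxrank_delta.
Qed.

Lemma rkT : rk setT = \rank U.
Proof.
rewrite /rk /Cm mxrank_tr; congr (\rank _); apply/matrixP => a b.
by rewrite !mxE in_setT.
Qed.

Lemma rk0 : rk set0 = 0%N.
Proof.
rewrite /rk (_ : Cm set0 = 0) ?mxrank0 //; apply/matrixP => a b.
by rewrite !mxE in_set0.
Qed.

Lemma rk_addset (A B : {set 'I_k}) : leq (rk (A :|: B)) (addn (rk A) #|B|).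
Proof.
move: {2}#|B| (erefl #|B|) => m; elim: m A B => [|m IH] A B hB.
  move/eqP: hB; rewrite cards_eq0 => /eqP ->; rewrite setU0; lia.
have : leq 1 #|B| by rewrite hB.
case/card_gt0P => j jB.
have hB' : #|B :\ j| = m by move: (cardsD1 j B); rewrite jB hB; lia.
have -> : A :|: B = (A :|: (B :\ j)) :|: [set j].
  by rewrite -setUA [_ :|: [set j]]setUC setD1K.
have h1 := rk_submod (A :|: B :\ j) [set j].
have h2 := rk_set1 j. have h3 := IH A _ hB'. lia.
Qed.

Lemma sens_step i : (rk [set~ i]).+1 = rk setT ->
  forall J : {set 'I_k}, i \notin J -> rk (i |: J) = (rk J).+1.
Proof.
move=> hs J hi.
have h1 := rk_submod (i |: J) [set~ i].
rewrite (_ : (i |: J) :|: [set~ i] = setT) in h1; last first.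
  by apply/setP => x; rewrite !inE; case: (x == _); rewrite /= ?orbT.
rewrite (_ : (i |: J) :&: [set~ i] = J) in h1; last first.
  apply/setP => x; rewrite !inE; case: (x =P i) => [->|] /=.
    by rewrite (negbTE hi).
  by rewrite andbT.
have h2 := rk_addset J [set i]; rewrite cards1 setUC in h2.
lia.
Qed.

Lemma robust_gap : (forall j, (rk [set~ j]).+1 <> rk setT) ->
  forall I : {set 'I_k}, I != setT -> leq (rk setT).+1 (addn (rk I) (k - #|I|)).
Proof.
move=> hr I hI.
have [j hj] : exists j, j \notin I.
  case: (pickP (fun j => j \notin I)) => [j hj|h]; first by exists j.
  case/eqP: hI; apply/setP => x; rewrite inE; have := h x; by case: (x \in I).
have hk : leq 1 k by case: j {hj} => /= m hm; lia.
have h1 := rk_addset [set~ j] [set j].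
rewrite cards1 (_ : [set~ j] :|: [set j] = setT) in h1; last first.
  by apply/setP => x; rewrite !inE; case: (x == _); rewrite /= ?orbT.
have h2 := @rk_mono [set~ j] setT (subsetT _).
have h4 := hr j.
have hsub : I \subset [set~ j].
  apply/subsetP => x xI; rewrite !inE; apply/eqP => e; by rewrite -e xI in hj.
have h3 := rk_addset I ([set~ j] :\: I).
rewrite (_ : I :|: ([set~ j] :\: I) = [set~ j]) in h3; last first.
  apply/setP => x; rewrite !inE; case xI: (x \in I) => //=.
  by move/subsetP: hsub => /(_ x xI); rewrite !inE.
rewrite cardsD (setIidPr hsub) cardsC1 card_ord in h3.
have h5 := subset_leq_card hsub; rewrite cardsC1 card_ord in h5.
lia.
Qed.

End LinAlg.

Local Open Scope R_scope.

Definition FF (lam : R) (n k : nat) (U : 'M['F_2]_k) (I : {set 'I_k}) : R :=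
  (-1) ^ (subn k #|I|) *
      Rpower (Nn n) (- (lam * (INR (dim_proj U I) + INR k - INR #|I|))).

Arguments FF lam n {k} U I.

Lemma INR_addn a b : INR (addn a b) = INR a + INR b.
Proof. by rewrite -plusE plus_INR. Qed.

Lemma INR_subn a b : leq b a -> INR (subn a b) = INR a - INR b.
Proof. move=> h; rewrite -minusE minus_INR //; apply/leP; exact h. Qed.

Lemma FF_step lam n k (U : 'M['F_2]_k) i :
  sensitive U i -> forall J : {set 'I_k}, i \notin J -> FF lam n U (i |: J) = - FF lam n U J.
Proof.
move=> hs J hi.
have hs' : (rk U [set~ i]).+1 = rk U setT by rewrite rkT rkE.
have hd := @sens_step _ U i hs' J hi; rewrite !rkE in hd.
have hc : #|i |: J| = (#|J|).+1 by rewrite cardsU1 hi.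
have hck : leq (#|J|).+1 k by rewrite -hc; have := max_card (mem (i |: J)); rewrite card_ord.
rewrite /FF hd hc.
have -> : subn k #|J| = S (subn k (#|J|).+1) by lia.
rewrite -tech_pow_Rmult !S_INR.
replace (INR (dim_proj U J) + 1 + INR k - (INR #|J| + 1)) with
  (INR (dim_proj U J) + INR k - INR #|J|) by ring.
ring.
Qed.

Lemma R_U_nonrobust lam n k (U : 'M['F_2]_k) i : sensitive U i -> R_U lam n U = 0.
Proof.
move=> hs.
set h := fun I : {set 'I_k} => if i \in I then I :\ i else i |: I.
have hh : cancel h h.
  move=> I; rewrite /h; case hI: (i \in I).
    by rewrite setD11 setD1K.
  by rewrite setU11 setU1K // hI.
have hF : forall I : {set 'I_k}, FF lam n U (h I) = - FF lam n U I.
  move=> I; rewrite /h; case hI: (i \in I).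
    have e := @FF_step lam n _ U i hs _ (negbT (setD11 i I)); rewrite (setD1K hI) in e; by rewrite /= e Ropp_involutive.
  by rewrite /=; apply: (@FF_step lam n _ U i hs I); rewrite hI.
have e1 : R_U lam n U = \big[Rplus/0]_(I : {set 'I_k}) FF lam n U I by [].
have e2 := reindex_inj (op := Rplus) (x := 0) (P := xpredT) (F := FF lam n U) (can_inj hh).
have e4 : R_U lam n U = \big[Rplus/0]_(I : {set 'I_k}) FF lam n U (h I).
  rewrite e1; exact: e2.
have e3 : \big[Rplus/0]_(I : {set 'I_k}) FF lam n U (h I) = - R_U lam n U.
  rewrite e1.
  apply: (big_ind2 (fun a b : R => a = - b)); [lra | move=> ? ? ? ? -> ->; lra | ].
  by move=> I _; apply: hF.
lra.
Qed.

Lemma exp_le' x y : x <= y -> exp x <= exp y.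
Proof.
move=> h; case: (Rle_lt_or_eq_dec _ _ h) => [h'|->]; last by right.
left; exact: exp_increasing.
Qed.

Lemma INR_expn2 k : INR (expn 2 k) = 2 ^ k.
Proof.
elim: k => [|k IH]; first by [].
by rewrite expnS -multE mult_INR IH /=; ring.
Qed.

Lemma ln2_pos : 0 < ln 2.
Proof. have := ln_increasing 1 2 Rlt_0_1 ltac:(lra); rewrite ln_1; lra. Qed.

Lemma robust_bound lam n k (U : 'M['F_2]_k) :
  0 < lam -> robust U -> INR k <= lam * INR n - 1 ->
  / 2 * Rpower (Nn n) (- (lam * INR (dimU U))) <= R_U lam n U /\
  R_U lam n U <= 3 / 2 * Rpower (Nn n) (- (lam * INR (dimU U))).
Proof.
move=> hlam hr hk.
set P := Rpower (Nn n) (- (lam * INR (dimU U))).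
have eL : ln (Nn n) = INR n * ln 2 by rewrite /Nn ln_pow; lra.
have hL : 0 <= ln (Nn n).
  rewrite eL; have := pos_INR n; have := ln2_pos; nra.
set L := ln (Nn n).
set q := exp (- lam * L).
have hP : 0 < P by rewrite /P /Rpower; apply: exp_pos.
have hq0 : 0 < q by apply: exp_pos.
have hq : 2 ^ k * q <= / 2.
  have e2k : 2 ^ k = exp (INR k * ln 2) by rewrite -Rpower_pow; [reflexivity|lra].
  have eh : exp (- ln 2) = / 2 by rewrite exp_Ropp exp_ln; lra.
  rewrite e2k /q -exp_plus -eh; apply: exp_le'.
  rewrite /L eL; have := ln2_pos; nra.
have hr' : forall j, (rk U [set~ j]).+1 <> rk U setT.
  move=> j; rewrite rkT rkE; exact: hr j.
have hI : forall I : {set 'I_k}, I != setT -> Rabs (FF lam n U I) <= P * q.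
  move=> I hI.
  have g := robust_gap U hr' I hI; rewrite rkT rkE in g.
  have hc : leq #|I| k by have := max_card (mem I); rewrite card_ord.
  have gr : INR (dimU U) + 1 <= INR (dim_proj U I) + INR k - INR #|I|.
    have := le_INR _ _ (leP g); rewrite S_INR INR_addn INR_subn //; rewrite /dimU; lra.
  rewrite /FF Rabs_mult pow_1_abs Rmult_1_l Rabs_pos_eq; last first.
    by rewrite /Rpower; left; apply: exp_pos.
  rewrite /P /q /Rpower -exp_plus; apply: exp_le'.
  rewrite -/L.
  have : 0 <= lam * L by apply: Rmult_le_pos; [lra|exact: hL].
  nra.
have hcnt : Rabs (\big[Rplus/0]_(I : {set 'I_k} | true && (I != setT)) FF lam n U I) <=
    INR (\big[addn/0%nat]_(I : {set 'I_k} | true && (I != setT)) 1%nat) * (P * q).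
  apply: (big_ind2 (fun a (b : nat) => Rabs a <= INR b * (P * q))).
  - rewrite Rabs_R0 /=; lra.
  - move=> x1 x2 y1 y2 h1 h2; rewrite INR_addn; have := Rabs_triang x1 y1; lra.
  - move=> I /andP [_ hI']; have := hI I hI'; rewrite /=; lra.
have hc2 : INR (\big[addn/0%nat]_(I : {set 'I_k} | true && (I != setT)) 1%nat) <= 2 ^ k.
  rewrite -INR_expn2; apply: le_INR; apply/leP.
  rewrite big_mkcond; apply: leq_trans (_ : leq _ (\big[addn/0%nat]_(I : {set 'I_k}) 1%nat)) _.
    by apply: leq_sum => I _; case: (_ && _).
  rewrite sum1_card (_ : #|xpredT| = #|{set 'I_k}|) //.
  by rewrite -cardsT -powersetT card_powerset cardsT card_ord.
have eR : R_U lam n U = FF lam n U setT +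
   \big[Rplus/0]_(I : {set 'I_k} | true && (I != setT)) FF lam n U I.
  by rewrite /R_U (bigD1 setT).
have eT : FF lam n U setT = P.
  rewrite /FF cardsT card_ord subnn /= Rmult_1_l.
  have -> : dim_proj U setT = dimU U by rewrite -rkE rkT.
  rewrite /P; f_equal; ring.
set rest := \big[Rplus/0]_(I : {set 'I_k} | true && (I != setT)) FF lam n U I in hcnt eR.
have h1 : INR (\big[addn/0%nat]_(I : {set 'I_k} | true && (I != setT)) 1%nat) * (P * q) <= 2 ^ k * (P * q).
  apply: Rmult_le_compat_r => //; nra.
have h2 : 2 ^ k * (P * q) <= P / 2 by nra.
have := Rle_abs rest; have := Rle_abs (- rest); rewrite Rabs_Ropp.
rewrite eR eT; lra.
Qed.

Lemma ln_ge1 x : 3 <= x -> 1 <= ln x.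
Proof.
move=> hx; have he := exp_le_3.
case: (Rle_lt_or_eq_dec (exp 1) x ltac:(lra)) => [h|h].
  left; rewrite -{1}(ln_exp 1); apply: ln_increasing => //; apply: exp_pos.
by right; rewrite -h ln_exp.
Qed.

Theorem mainTheorem6 :
  forall (lam : R), 0 < lam < 1 ->
  forall (k : nat -> nat),
    (forall n : nat, (2 <= k n)%nat) ->
    little_o_n_over_log k ->
    (forall U : forall n : nat, 'M['F_2]_(k n),
       (forall n : nat, robust (U n)) ->
       exists c C : R, 0 < c /\ 0 < C /\
         exists n0 : nat, forall n : nat, (n0 <= n)%nat ->
           c * Rpower (Nn n) (- (lam * INR (dimU (U n)))) <= R_U lam n (U n) /\
           R_U lam n (U n) <= C * Rpower (Nn n) (- (lam * INR (dimU (U n)))))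
    /\
    (forall (n : nat) (U : 'M['F_2]_(k n)), ~ robust U -> R_U lam n U = 0).
Proof.
move=> lam hlam k _ hlo; split.
  move=> U hrob; exists (/ 2), (3 / 2); split; [lra|split; [lra|]].
  have [n1 hn1] := hlo (lam / 2) ltac:(lra).
  have [m hm] := INR_unbounded (2 / lam).
  exists (n1 + m + 3)%nat => n hn.
  apply: robust_bound; [lra | exact: hrob |].
  have hkn := hn1 n ltac:(lia).
  have h3 : 3 <= INR n.
    replace 3 with (INR 3) by (simpl; lra); apply: le_INR; lia.
  have hmn : INR m <= INR n by apply: le_INR; lia.
  have hl := ln_ge1 (INR n) h3.
  have hinv : / ln (INR n) <= 1 by rewrite -Rinv_1; apply: Rinv_le_contravar; lra.
  have hdiv : INR n / ln (INR n) <= INR n.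
    rewrite /Rdiv; have := pos_INR n; nra.
  have hlam2 : lam * (2 / lam) = 2 by field; lra.
  have hbig : 2 < lam * INR n by nra.
  nra.
move=> n U hnr.
case: (pickP (fun i => (dim_proj U [set~ i]).+1 == dimU U)) => [i /eqP hi | h].
  exact: (@R_U_nonrobust lam n (k n) U i hi).
exfalso; apply: hnr => i hs; move: (h i) => /=; rewrite hs eqxx //.
Qed.
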